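(* During the Part I procedure, suppose a bridge step processes the edge $xy$ and forms a blossom. Let $v$ be a vertex that was odd before this step and lies on the tree path from (the blossom containing) $y$ to the base of the newly formed blossom, and let $uv\notin M$ be an edge with $u$ even (possibly $u$ in a different tree). Then $v$ becomes even in this step, and $\mathrm{lcp}(x)+\mathrm{lcp}(y)\le \mathrm{lcp}(v)+\mathrm{lcp}(u)$.
   Context: Let $G=(V,E)$ be a finite undirected graph and $M$ a matching in $G$; free vertices and $\mathit{mate}(v)$ are as usual. The Part I procedure maintains a search structure $S$: a forest whose nodes are either single (odd) vertices or blossoms (disjoint vertex sets with a distinguished base vertex), each tree rooted at a blossom containing a free vertex. Vertices in $S$ are labelled even (those in blossoms) or odd; vertices not in $S$ are unlabelled. A vertex is born even/odd according to the label it receives when inserted. The procedure maintains $\mathrm{lcp}(v)$ for even vertices and $\mathrm{lcp}_{\mathrm{odd}}(v)$ for vertices born odd. The blossom nodes currently in $S$ are the maximal blossoms. Phase $0$: every free vertex $v$ becomes the root of its own tree as a trivial blossom $\{v\}$ with base $v$, even, $\mathrm{lcp}(v)=0$. For $\Delta=1,2,\dots$, phase $\Delta$ does: (i) if $\Delta$ is even, growth steps: while some even vertex $v$ with $\mathrm{lcp}(v)=\Delta-2$ has a neighbour $x$ not in $S$, add $x$ as an odd child of the blossom containing $v$ with $\mathrm{lcp}_{\mathrm{odd}}(x)=\Delta-1$, and $\mathit{mate}(x)$ as a child of $x$, as a trivial even blossom with $\mathrm{lcp}(\mathit{mate}(x))=\Delta$; (ii) bridge steps: while there is a non-matching edge $xy$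 with $x,y$ even, in different maximal blossoms $B_x,B_y$, and $\mathrm{lcp}(x)+\mathrm{lcp}(y)=2\Delta-2$: if $B_x,B_y$ lie in different trees the procedure stops; otherwise let $B$ be the lowest common ancestor of $B_x,B_y$; every odd vertex $z$ on the tree paths from $B_x$ and $B_y$ to $B$ becomes even with $\mathrm{lcp}(z)=\mathrm{lcp}(x)+1+\mathrm{lcp}(y)-\mathrm{lcp}_{\mathrm{odd}}(z)$, and $B$ together with all blossoms and odd vertices on both paths is merged into one new blossom with base equal to the base of $B$, replacing $B$ in the tree. *)

(* Defs.v *)
From mathcomp Require Import all_boot.
Set Implicit Arguments. Unset Strict Implicit. Unset Printing Implicit Defensive.

Inductive label := Unl | Odd | Even.

Definition is_even (l : label) : bool := if l is Even then true else false.
Definition is_odd (l : label) : bool := if l is Odd then true else false.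
Definition is_unl (l : label) : bool := if l is Unl then true else false.

(* A state of the search structure S.
   - [lab w]  : label of w;
   - [base w] : identifier of the forest node containing w (for an even vertex,
                the base vertex of its maximal blossom; for an odd vertex, the
                vertex itself);
   - [par n]  : parent node of the node with identifier n (None for roots);
   - [lcp w]  : lcp(w), meaningful for even w;
   - [lcpo w] : lcp_odd(w), meaningful for vertices born odd. *)
Record state (T : Type) := State {
  lab  : T -> label;
  base : T -> T;
  par  : T -> option T;
  lcp  : T -> nat;
  lcpo : T -> nat }.

Inductive stage := Growing | Bridging.

Section Procedure.
Variables (T : finType) (adj : rel T) (mate : T -> option T).

Definition inM (a b : T) : bool := mate a == Some b.
Definition free (v : T) : bool := mate v == None.

Definition anc (s : state T) (n m : T) : bool :=
  connect (fun a b => par s a == Some b) n m.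

Definition onpath (s : state T) (n a b : T) : bool := anc s a n && anc s n b.

Definition same_tree (s : state T) (a b : T) : Prop := exists r, anc s a r && anc s b r.

Definition is_lca (s : state T) (a b B : T) : Prop :=
  [/\ anc s a B, anc s b B & forall C, anc s a C -> anc s b C -> anc s B C].

Definition init_state : state T :=
  State (fun w => if free w then Even else Unl) id (fun _ => None)
        (fun _ => 0) (fun _ => 0).

Definition grow_cond (s : state T) (d : nat) (v x : T) : Prop :=
  [/\ lab s v = Even, lcp s v = d - 2, adj v x & lab s x = Unl].

Definition grow (s : state T) (d : nat) (v x m : T) : state T :=
  State (fun w => if w == x then Odd else if w == m then Even else lab s w)
        (fun w => if w == x then x else if w == m then m else base s w)
        (fun n => if n == x then Some (base s v)
                  else if n == m then Some x else par s n)
        (fun w => if w == m then d else lcp s w)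
        (fun w => if w == x then d - 1 else lcpo s w).

Definition bridge_cond (s : state T) (d : nat) (x y : T) : Prop :=
  [/\ adj x y, ~~ inM x y, lab s x = Even /\ lab s y = Even,
      base s x != base s y & lcp s x + lcp s y = d.*2 - 2].

Definition merged_node (s : state T) (x y B n : T) : bool :=
  onpath s n (base s x) B || onpath s n (base s y) B.

Definition merged (s : state T) (x y B w : T) : bool :=
  ~~ is_unl (lab s w) && merged_node s x y B (base s w).

Definition form_blossom (s : state T) (x y B : T) : state T :=
  State (fun w => if merged s x y B w then Even else lab s w)
        (fun w => if merged s x y B w then B else base s w)
        (fun n => if merged_node s x y B n then par s n
                  else match par s n with
                       | Some m => if merged_node s x y B m then Some B else Some m
                       | None => None
                       end)
        (fun w => if merged s x y B w && is_odd (lab s w)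
                  then lcp s x + 1 + lcp s y - lcpo s w else lcp s w)
        (lcpo s).

Inductive reach : nat -> stage -> state T -> Prop :=
| reach_init : reach 1 Growing init_state
| reach_grow d s v x m :
    reach d Growing s -> ~~ odd d -> grow_cond s d v x -> mate x = Some m ->
    reach d Growing (grow s d v x m)
| reach_end_growth d s :
    reach d Growing s -> (odd d \/ ~ (exists v x, grow_cond s d v x)) ->
    reach d Bridging s
| reach_blossom d s x y B :
    reach d Bridging s -> bridge_cond s d x y ->
    same_tree s (base s x) (base s y) -> is_lca s (base s x) (base s y) B ->
    reach d Bridging (form_blossom s x y B)
| reach_next_phase d s :
    reach d Bridging s -> ~ (exists x y, bridge_cond s d x y) ->
    reach d.+1 Growing s.

End Procedure.

(* Main.v *)
Require Import Defs.
From mathcomp Require Import all_boot.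
From mathcomp Require Import zify.

Section Inv.
Variables (T : finType) (adj : rel T) (mate : T -> option T).

Definition sb (st : stage) : nat := if st is Bridging then 1 else 0.

Definition inv (d : nat) (st : stage) (s : state T) : Prop :=
 [/\ 1 <= d,
  forall w, lab s w = Even -> exists k, lcp s w = 2 * k,
  forall w, lab s w = Odd -> lcpo s w <= d - 1 /\ exists k, lcpo s w = 2 * k + 1,
  forall u w, lab s u = Even -> adj u w -> lcp s u + 2 < d + sb st -> lab s w <> Unl &
  forall u v, lab s u = Even -> lab s v = Odd -> adj u v -> lcpo s v <= lcp s u + 1].

Lemma inv_reach d st s : reach adj mate d st s -> inv d st s.
Proof.
elim => {d st s}.
- split => //=.
  + move=> w; case: (free mate w) => // _; by exists 0.
  + move=> w; by case: (free mate w).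
- move=> d s v x m _ [D1 Hpar Hodd Hnb HI] hd [hv hlv hvx hx] hm.
  have [k dk] : exists k, d = 2 * k.
    have := odd_double_half d; rewrite (negbTE hd) add0n => e; exists d./2; lia.
  split => /=.
  + done.
  + move=> w; case: (w =P x) => // _; case: (w =P m) => [_ _|_ /Hpar //]; by exists k.
  + move=> w; case: (w =P x) => [_ _|_].
      split; [lia| exists (k - 1); lia].
    case: (w =P m) => // _ /Hodd [h1 h2]; by split.
  + move=> u w; case: (u =P x) => // nux; case: (u =P m) => [_ _ _|num]; first lia.
    move=> hu huw hlt; case: (w =P x) => // _; case: (w =P m) => // _.
    exact: Hnb hu huw hlt.
  + move=> u w; case: (u =P x) => // nux; case: (u =P m) => [_ _|num hu].
    * case: (w =P x) => [_ _ _ | nwx]; first lia.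
      case: (w =P m) => // _ /Hodd [h _] _; lia.
    * case: (w =P x) => [-> _ hux|nwx].
        have [hlt|hge] := ltnP (lcp s u + 2) d; last lia.
        suff: lab s x <> Unl by rewrite hx.
        apply: (Hnb u x hu hux); rewrite /sb; lia.
      case: (w =P m) => // nwm hw; exact: HI.
- move=> d s _ [D1 Hpar Hodd Hnb HI] hcase; split => //.
  move=> u w hu huw /= hlt.
  have [hl|he] : lcp s u + 2 < d + 0 \/ lcp s u + 2 = d by lia.
    exact: (Hnb u w hu huw hl).
  case: hcase => [hod|hng].
    have [k hk] := Hpar u hu.
    by move: hod; rewrite -he hk oddD oddM.
  move=> hw; apply: hng; exists u, w; split => //; lia.
- move=> d s x y B _ [D1 Hpar Hodd Hnb HI] [hxy hnm [hx hy] hb hl] _ _.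
  have hmg : forall w, merged s x y B w -> lab s w = Odd \/ lab s w = Even.
    move=> w /andP[]; case: (lab s w) => //; auto.
  have [kx hkx] := Hpar x hx; have [ky hky] := Hpar y hy.
  split => /=.
  + done.
  + move=> w; case hm: (merged s x y B w) => /=; last exact: Hpar.
    move=> _; case: (hmg w hm) => hw; rewrite hw /=; last exact: Hpar.
    have [h1 [k hk]] := Hodd w hw; exists (kx + ky - k); lia.
  + move=> w; case hm: (merged s x y B w) => //= hw; exact: Hodd.
  + move=> u w; case hmu: (merged s x y B u) => /=.
    * move=> _ huw; case: (hmg u hmu) => hu; rewrite hu /=.
        have [h1 _] := Hodd u hu; move=> hlt; exfalso; lia.
      move=> hlt; case: (merged s x y B w) => //; exact: Hnb u w hu huw hlt.
    * move=> hu huw hlt; case: (merged s x y B w) => //; exact: Hnb hu huw hlt.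
  + move=> u v hu'; case hmv: (merged s x y B v) => //= hv huv.
    move: hu'; case hmu: (merged s x y B u) => /= hu'.
    * have [h2 _] := Hodd v hv.
      case: (hmg u hmu) => hu; rewrite hu /=.
        have [h1 _] := Hodd u hu; lia.
      exact: HI.
    * exact: HI.
- move=> d s _ [D1 Hpar Hodd Hnb HI] _; split => //.
  + move=> w /Hodd [h1 h2]; split => //; lia.
  + move=> u w hu huw /= hlt; apply: (Hnb u w hu huw); rewrite /=; lia.
Qed.

End Inv.

Theorem lemma3 (T : finType) (adj : rel T) (mate : T -> option T)
  (adj_sym : symmetric adj) (adj_irr : irreflexive adj)
  (M_ok : forall a b, mate a = Some b -> adj a b /\ mate b = Some a)
  (d : nat) (s : state T) (x y B : T) :
  reach adj mate d Bridging s ->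
  bridge_cond adj mate s d x y ->
  same_tree s (base s x) (base s y) ->
  is_lca s (base s x) (base s y) B ->
  let s' := form_blossom s x y B in
  forall v u : T,
    lab s v = Odd -> onpath s (base s v) (base s y) B ->
    adj u v -> ~~ inM mate u v -> lab s' u = Even ->
    lab s' v = Even /\ lcp s x + lcp s y <= lcp s' v + lcp s' u.
Proof.
move=> Hr [hxy hnm [hx hy] hb hl] _ _ s' v u hv hon huv _ hu'.
have [D1 _ Hodd _ HI] := @inv_reach T adj mate _ _ _ Hr.
have hmv : merged s x y B v by rewrite /merged /merged_node hv hon orbT.
have hmg : forall w, merged s x y B w -> lab s w = Odd \/ lab s w = Even.
  move=> w /andP[]; case: (lab s w) => //; auto.
have [h2 _] := Hodd v hv.
split; first by rewrite /s' /= hmv.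
move: hu'; rewrite /s' /= hmv hv /=.
case hmu: (merged s x y B u) => /= hu'.
- case: (hmg u hmu) => hu; rewrite hu /=.
    have [h1 _] := Hodd u hu; lia.
  have := HI u v hu hv huv; lia.
- have := HI u v hu' hv huv; lia.
Qed.
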